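(* Let $p>1$, $q=\frac{p}{p-1}$ and $0<a<b$. Then $$|A(a,b)-L(a,b)|\le \frac{\log b-\log a}{2(p+1)^{1/p}}\,\bigl(A(|a|^q,|b|^q)\bigr)^{1/q}.$$
   Context: For positive $x,y$: the arithmetic mean is $A(x,y)=\frac{x+y}{2}$; the logarithmic mean is $L(x,y)=x$ if $x=y$ and $L(x,y)=\frac{y-x}{\log y-\log x}$ if $x\ne y$. *)

(* Defs.v *)
From Stdlib Require Import Reals.
Open Scope R_scope.

Definition AM (x y : R) : R := (x + y) / 2.

Definition LM (x y : R) : R :=
  if Req_EM_T x y then x else (y - x) / (ln y - ln x).

(* Main.v *)
Require Import Defs.
From Stdlib Require Import Reals Lra Psatz.
From Coquelicot Require Import Coquelicot.
Open Scope R_scope.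

Lemma f1 (h : R) : 0 <= h -> 0 <= exp h * (h-2) + h + 2.
Proof.
  intros Hh. destruct (Req_dec h 0) as [->|Hn].
  { rewrite exp_0; lra. }
  destruct (MVT_cor2 (fun x => exp x * (x-2) + x + 2) (fun x => exp x * (x-2) + exp x * 1 + 1) 0 h)
    as [c [Hc1 Hc2]]; [lra| |].
  { intros c _. apply is_derive_Reals. auto_derive; auto; ring. }
  rewrite exp_0 in Hc1.
  assert (H1 := exp_ineq1_le (-c)).
  assert (H2 : exp (-c) * exp c = 1) by (rewrite <- exp_plus; replace (-c+c) with 0 by ring; apply exp_0).
  assert (H3 := exp_pos c).
  assert (0 <= exp c * (c - 2) + exp c * 1 + 1) by nra.
  nra.
Qed.

Lemma f2 (h : R) : 0 <= h -> 0 <= exp h * (h^2/8 - h/2 + 1) - h/2 - 1.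
Proof.
  intros Hh. destruct (Req_dec h 0) as [->|Hn].
  { rewrite exp_0; lra. }
  destruct (MVT_cor2 (fun x => exp x * (x^2/8 - x/2 + 1) - x/2 - 1)
     (fun x => exp x * (x^2/8 - x/2 + 1) + exp x * (x/4 - 1/2) - 1/2) 0 h)
    as [c [Hc1 Hc2]]; [lra| |].
  { intros c _. apply is_derive_Reals. auto_derive; auto. field. }
  rewrite exp_0 in Hc1.
  assert (H1 := exp_ineq1_le c).
  assert (0 <= exp c * (c^2/8 - c/2 + 1) + exp c * (c/4 - 1/2) - 1/2).
  { assert (0 < c^2/8 - c/4 + 1/2) by nra.
    assert ((1+c) * (c^2/8 - c/4 + 1/2) <= exp c * (c^2/8 - c/4 + 1/2)) by nra.
    nra. }
  nra.
Qed.

Theorem proposition1 (p q a b : R) :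
  1 < p -> q = p / (p - 1) -> 0 < a -> a < b ->
  Rabs (AM a b - LM a b) <=
    (ln b - ln a) / (2 * Rpower (p + 1) (1 / p)) *
    Rpower (AM (Rpower (Rabs a) q) (Rpower (Rabs b) q)) (1 / q).
Proof.
  intros Hp Hq Ha Hab.
  assert (Hb : 0 < b) by lra.
  set (h := ln b - ln a).
  assert (Hh : 0 < h) by (unfold h; assert (ln a < ln b) by (apply ln_increasing; lra); lra).
  set (E := exp h).
  assert (HbE : b = a * E).
  { unfold E, h, Rminus. rewrite exp_plus, exp_Ropp, !exp_ln by lra. field. lra. }
  assert (HL : LM a b = (b - a) / h).
  { unfold LM. destruct (Req_EM_T a b); [lra|reflexivity]. }
  assert (F1 := f1 h (Rlt_le _ _ Hh)). assert (F2 := f2 h (Rlt_le _ _ Hh)).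
  fold E in F1, F2.
  assert (HA1 : 0 <= AM a b - LM a b).
  { rewrite HL. unfold AM. rewrite HbE.
    apply Rmult_le_reg_r with (2*h); [lra|].
    replace ((a + a * E) / 2 - (a * E - a) / h) with (((a + a*E)*h - 2*(a*E - a))/(2*h)) by (field; lra).
    unfold Rdiv. rewrite Rmult_assoc, Rinv_l by lra. nra. }
  assert (HA2 : AM a b - LM a b <= h * b / 8).
  { rewrite HL. unfold AM. rewrite HbE.
    replace ((a + a * E) / 2 - (a * E - a) / h) with (((a + a*E)*h - 2*(a*E - a))/(2*h)) by (field; lra).
    apply Rmult_le_reg_r with (2*h); [lra|].
    unfold Rdiv. rewrite Rmult_assoc, Rinv_l by lra. nra. }
  rewrite Rabs_pos_eq by exact HA1.
  eapply Rle_trans; [exact HA2|].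
  rewrite (Rabs_pos_eq a), (Rabs_pos_eq b) by lra.
  set (P := Rpower (p+1) (1/p)).
  set (M := Rpower (AM (Rpower a q) (Rpower b q)) (1/q)).
  assert (HP : 0 < P) by (unfold P, Rpower; apply exp_pos).
  assert (HM : 0 < M) by (unfold M, Rpower; apply exp_pos).
  assert (Hq1 : 1 / q = 1 - 1 / p) by (rewrite Hq; field; lra).
  assert (Hqpos : 0 < q) by (rewrite Hq; apply Rdiv_lt_0_compat; lra).
  assert (Key : b * P <= 4 * M).
  { assert (Hl2 : 1/2 <= ln 2).
    { assert (exp (1/2) <= 2).
      { assert (exp (1/2) * exp (1/2) = exp 1) by (rewrite <- exp_plus; f_equal; lra).
        assert (H3 := exp_le_3). assert (H0 := exp_pos (1/2)). nra. }
      rewrite <- (ln_exp (1/2)). apply ln_le; [apply exp_pos| assumption]. }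
    assert (HlnM : ln b - (1/q) * ln 2 <= ln M).
    { unfold M. rewrite ln_Rpower.
      assert (ln (Rpower b q / 2) <= ln (AM (Rpower a q) (Rpower b q))).
      { apply ln_le. apply Rdiv_lt_0_compat; [unfold Rpower; apply exp_pos|lra].
        unfold AM. assert (0 < Rpower a q) by (unfold Rpower; apply exp_pos). lra. }
      rewrite ln_div in H by (try (unfold Rpower; apply exp_pos); lra).
      rewrite ln_Rpower in H.
      assert (0 < 1/q) by (apply Rdiv_lt_0_compat; lra).
      assert (1/q * (q * ln b - ln 2) <= 1/q * ln (AM (Rpower a q) (Rpower b q))) by nra.
      replace (ln b) with (1/q * (q * ln b)) at 1 by (field; lra). lra. }
    assert (HlnP : ln P = 1/p * ln (p+1)) by (unfold P; apply ln_Rpower).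
    assert (Hlnp : ln ((p+1)/2) <= (p+1)/2 - 1).
    { assert (H := exp_ineq1_le (ln ((p+1)/2))). rewrite exp_ln in H by lra. lra. }
    rewrite ln_div in Hlnp by lra.
    assert (Hcore : ln b + ln P <= ln 4 + ln M).
    { assert (ln 4 = 2 * ln 2) by (replace 4 with (2*2) by ring; rewrite ln_mult by lra; ring).
      rewrite HlnP. rewrite Hq1 in HlnM.
      assert (ln (p+1) <= ln 2 + p * ln 2) by nra.
      assert (0 < 1/p) by (apply Rdiv_lt_0_compat; lra).
      assert (1/p * ln (p+1) <= 1/p * (ln 2 + p * ln 2)) by nra.
      replace (1/p * (ln 2 + p * ln 2)) with (ln 2 + 1/p * ln 2) in H2 by (field; lra).
      lra. }
    rewrite <- ln_mult in Hcore by lra. rewrite <- ln_mult in Hcore by lra.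
    destruct (Rle_or_lt (b*P) (4*M)) as [|Hc]; [assumption|].
    assert (ln (4*M) < ln (b*P)) by (apply ln_increasing; nra). lra. }
  unfold Rdiv.
  assert (0 < / (2*P)) by (apply Rinv_0_lt_compat; lra).
  replace (h * / (2 * P) * M) with (h * (4*M) / (8*P)) by (field; lra).
  replace (h * b * / 8) with (h * (b*P) / (8*P)) by (field; lra).
  unfold Rdiv. apply Rmult_le_compat_r; [apply Rlt_le, Rinv_0_lt_compat; lra|].
  apply Rmult_le_compat_l; lra.
Qed.
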